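(* Consider the following hybrid sealed-bid auction for a single item with $n = n_A + n_B$ risk-neutral bidders. $n_A$ bidders are ''integrated'', each with a private value drawn independently from a distribution with CDF $F_A$ and density $f_A$; $n_B$ bidders are ''non-integrated'', each with a private value drawn independently from a distribution with CDF $F_B$ and density $f_B$ (all draws mutually independent, values nonnegative). All bidders simultaneously submit bids and the highest bidder wins. If the winner is integrated, it pays the second-highest bid; if the winner is non-integrated, it pays its own bid. Suppose every integrated bidder bids its true value. Let $\sigma(\cdot)$ be a strictly increasing symmetric Bayes–Nash equilibrium bidding strategy of the non-integrated bidders (a non-integrated bidder with value $v$ bids $\sigma(v)$). Then for every value $v$, $$\sigma(v) = v - \frac{\int_{0}^v F_B^{n_B-1}(t)\, F_A^{n_A}(\sigma(t))\, dt}{F_B^{n_B-1}(v)\, F_A^{n_A}(\sigma(v))}.$$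
   Context: Bidders are risk neutral with quasilinear utility (value minus payment if winning, zero otherwise). $F^k$ denotes the $k$-th power of the CDF $F$. *)

(* Defs.v *)
From HB Require Import structures.
From mathcomp Require Import all_boot all_order all_algebra.
From mathcomp Require Import all_classical all_reals all_analysis.
Set Implicit Arguments. Unset Strict Implicit. Unset Printing Implicit Defensive.
Import Order.TTheory GRing.Theory Num.Theory.
Local Open Scope classical_set_scope.
Local Open Scope ring_scope.

Section Auction.
Variable R : realType.

Definition is_density (f : R -> R) : Prop :=
  measurable_fun setT f /\ (forall x, 0 <= f x) /\ (forall x, x < 0 -> f x = 0) /\
  (\int[@lebesgue_measure R]_(x in [set: R]) (f x)%:E = 1)%E.

Definition CDF (f : R -> R) (x : R) : R :=
  Rintegral (@lebesgue_measure R) `]-oo, x] f.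

Definition prob_below (f : R -> R) (g : R -> R) (b : R) : R :=
  Rintegral (@lebesgue_measure R) [set t | 0 <= t /\ g t < b] f.

(* Interim expected utility of a non-integrated bidder with value v bidding b,
   when the nA integrated bidders bid truthfully (values with density fA) and
   the other nB-1 non-integrated bidders bid sigma(value) (values with density
   fB), all values independent. The bidder wins iff its bid is strictly higher
   than all other bids (ties have probability zero), and then pays its own bid. *)
Definition payoffB (fA fB : R -> R) (nA nB : nat) (sigma : R -> R) (v b : R) : R :=
  (v - b) * (prob_below fA id b) ^+ nA * (prob_below fB sigma b) ^+ (nB - 1).

Definition is_BNE_B (fA fB : R -> R) (nA nB : nat) (sigma : R -> R) : Prop :=
  forall v b : R, 0 <= v -> payoffB fA fB nA nB sigma v b <= payoffB fA fB nA nB sigma v (sigma v).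

End Auction.

(* Main.v *)
Require Import Defs.
From HB Require Import structures.
From mathcomp Require Import all_boot all_order all_algebra.
From mathcomp Require Import all_classical all_reals all_analysis.
From mathcomp Require Import measurable_realfun lra ring.
Import Order.TTheory GRing.Theory Num.Theory.
Local Open Scope classical_set_scope.
Local Open Scope ring_scope.

Section Env.
Variable R : realType.
Notation mu := (@lebesgue_measure R).


Lemma fine_mu_oc (a b : R) : a <= b -> fine (mu `]a, b]) = b - a.
Proof.
move=> ab; rewrite lebesgue_measure_itv /=.
case: ifP => [_|]; first by [].
move/negbT; rewrite lte_fin -leNgt => ba.
have -> : a = b by apply/le_anti; rewrite ab ba.
by rewrite subrr.
Qed.

Lemma envelope (g U : R -> R) (v : R) :
  (forall a b, 0 <= a -> 0 <= b -> U a + (b - a) * g a <= U b) -> 0 <= v ->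
  U v - U 0 = Rintegral mu `[0, v] g.
Proof.
move=> HU v0.
have mono : forall a b, 0 <= a -> a <= b -> g a <= g b.
  move=> a b a0 ab; have b0 : 0 <= b by apply: le_trans ab.
  have h1 := HU a b a0 b0; have h2 := HU b a b0 a0.
  have [->//|] := eqVneq a b.
  move=> nab; have ab' : a < b by rewrite lt_neqAle nab.
  have : 0 <= (b - a) * (g b - g a) by nra.
  by rewrite pmulr_rge0 ?subr_gt0 // subr_ge0.
pose h x := if x < 0 then g 0 else g x.
have hnd : {homo h : x y / x <= y}.
  move=> x y xy; rewrite /h; case: ifPn => x0; case: ifPn => y0.
  - exact: lexx.
  - by apply: mono => //; rewrite leNgt.
  - by move: (le_lt_trans xy y0); rewrite (negbTE x0).
  - by apply: mono => //; rewrite leNgt.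
have hg : forall x, 0 <= x -> h x = g x.
  by move=> x x0; rewrite /h ltNge x0.
have inth : forall b, mu.-integrable `[0, b] (EFin \o h).
  move=> b; apply: measurable_bounded_integrable => //=.
  - rewrite lebesgue_measure_itv//=.
    by case: ifPn => // _; rewrite -EFinB ltry.
  - exact: nondecreasing_measurable.
  exists (`|h 0| + `|h b|); split; first exact: num_real.
  move=> M HM x; rewrite /= in_itv /= => /andP[x0 xb].
  apply: le_trans (ltW HM).
  have := hnd _ _ x0; have := hnd _ _ xb.
  have := ler_norm (h b); have := ler_norm (- h 0); rewrite normrN.
  have := normr_ge0 (h 0); have := normr_ge0 (h b).
  rewrite ler_norml; move=> *; apply/andP; split; lra.
pose I x := Rintegral mu `[0, x] g.
have Ih : forall x, I x = Rintegral mu `[0, x] h.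
  move=> x; apply: eq_Rintegral => y; rewrite inE /= in_itv /= => /andP[y0 _].
  by rewrite /h ltNge y0.
have Ioc : forall a b, 0 <= a -> a <= b -> I b - I a = Rintegral mu `]a, b] h.
  move=> a b a0 ab; rewrite !Ih; apply: Rintegral_itvB => //; by rewrite bnd_simp.
have intoc : forall a b, 0 <= a -> mu.-integrable `]a, b] (EFin \o h).
  move=> a b a0; apply: integrableS (inth b) => //.
  move=> x /=; rewrite !in_itv /= => /andP[ax ->]; rewrite andbT.
  exact: le_trans (ltW ax).
have bnds : forall a b, 0 <= a -> a <= b ->
    g a * (b - a) <= I b - I a <= g b * (b - a).
  move=> a b a0 ab; rewrite Ioc // -!fine_mu_oc // -!Rintegral_cst //.
  have icst : forall c : R, mu.-integrable `]a, b] (EFin \o (fun=> c)).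
    move=> c; apply: measurable_bounded_integrable => //=.
    - rewrite lebesgue_measure_itv//=.
      by case: ifPn => // _; rewrite -EFinB ltry.
    - exact: bounded_cst.
  apply/andP; split; apply: le_Rintegral => //; try exact: icst; try exact: intoc.
  - move=> x /=; rewrite in_itv /= => /andP[ax xb].
    rewrite -(hg a a0); apply: hnd; exact: ltW.
  - move=> x /=; rewrite in_itv /= => /andP[ax xb].
    rewrite -(hg b (le_trans a0 ab)); exact: hnd.
pose D x := U x - U 0 - I x.
have Dstep : forall a b, 0 <= a -> a <= b -> `|D b - D a| <= (g b - g a) * (b - a).
  move=> a b a0 ab; have b0 : 0 <= b := le_trans a0 ab.
  have h1 := HU a b a0 b0; have h2 := HU b a b0 a0.
  have /andP[h3 h4] := bnds a b a0 ab.
  rewrite /D ler_norml; apply/andP; split; nra.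
have I0 : I 0 = 0 by rewrite /I set_itv1 Rintegral_set1.
have Dind : forall n : nat, (0 < n)%N -> forall k : nat, (k <= n)%N ->
    `|D (k%:R * (v / n%:R))| <= (g (k%:R * (v / n%:R)) - g 0) * (v / n%:R).
  move=> n n0; elim => [|k IH] kn.
    by rewrite mul0r /D I0 !subrr normr0 mul0r.
  have hpos : 0 <= v / n%:R by rewrite divr_ge0.
  have k0 : 0 <= k%:R * (v / n%:R) by rewrite mulr_ge0.
  have IH' := IH (ltnW kn).
  have e : k.+1%:R * (v / n%:R) = k%:R * (v / n%:R) + v / n%:R.
    by rewrite -addn1 natrD mulrDl mul1r.
  rewrite e; set x := k%:R * (v / n%:R); set hh := v / n%:R.
  have xh : x <= x + hh by rewrite lerDl.
  have st := Dstep x (x + hh) k0 xh.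
  have e2 : x + hh - x = hh by rewrite addrC addKr.
  rewrite e2 in st.
  have tri : `|D (x + hh)| <= `|D (x + hh) - D x| + `|D x|.
    by rewrite -[X in `|X| <= _](subrK (D x)) ler_normD.
  have -> : (g (x + hh) - g 0) * hh = (g (x + hh) - g x) * hh + (g x - g 0) * hh.
    by rewrite -mulrDl addrA subrK.
  by apply: le_trans tri _; exact: lerD st IH'.
have Dv : forall n : nat, (0 < n)%N -> `|D v| <= (g v - g 0) * v / n%:R.
  move=> n n0; have := Dind n n0 n (leqnn n).
  have -> : n%:R * (v / n%:R) = v.
    by rewrite mulrC -mulrA mulVf ?mulr1 // pnatr_eq0 -lt0n.
  by rewrite mulrA.
have DV0 : D v = 0.
  apply/eqP; apply/negPn/negP => Dn0.
  have Dp : 0 < `|D v| by rewrite normr_gt0.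
  set C := (g v - g 0) * v.
  have C0 : 0 <= C by rewrite mulr_ge0 // subr_ge0; apply: mono.
  set n := (Num.truncn (C / `|D v|)).+1.
  have hn := truncnS_gt (C / `|D v|).
  have := Dv n isT; rewrite -/C ler_pdivlMr ?ltr0Sn // => H.
  rewrite ltr_pdivrMr // in hn.
  move: hn; rewrite -/n mulrC => hn.
  have : C < C by apply: lt_le_trans hn H.
  by rewrite ltxx.
rewrite /D in DV0; rewrite -/(I v); lra.
Qed.

Lemma dens_int (f : R -> R) : is_density f -> mu.-integrable setT (EFin \o f).
Proof.
move=> [mf [f0 [fneg fint]]]; apply/integrableP; split; first exact/measurable_EFinP.
under eq_integral => x _ do rewrite /= ger0_norm //.
by rewrite fint ltry.
Qed.

Lemma cdf_eq (f : R -> R) (b : R) : is_density f ->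
  Rintegral mu [set t | 0 <= t /\ t < b] f = CDF f b.
Proof.
move=> df; have [mf [f0 [fneg fint]]] := df.
rewrite /CDF -Rintegral_itv_bndo_bndc; last first.
  apply: (@integrableS _ _ _ mu setT) => //; exact: dens_int.
have zero : Rintegral mu `]-oo, 0[ f = 0.
  rewrite (@eq_Rintegral _ _ _ mu _ (fun=> 0)); last first.
    by move=> t; rewrite inE /= in_itv /= => t0; rewrite fneg.
  by rewrite Rintegral_cst // mul0r.
have [b0|b0] := ltP b 0.
  have -> : [set t | 0 <= t /\ t < b] = set0.
    by apply/seteqP; split => t //= [t0 tb]; move: (le_lt_trans t0 (lt_trans tb b0)); rewrite ltxx.
  rewrite Rintegral_set0 (@eq_Rintegral _ _ _ mu _ (fun=> 0)); last first.
    move=> t; rewrite inE /= in_itv /= => tb; rewrite fneg //; lra.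
  by rewrite Rintegral_cst // mul0r.
rewrite (@itv_bndbnd_setU _ _ _ (BLeft 0)) //.
rewrite Rintegral_setU //; last 2 first.
- apply: (@integrableS _ _ _ mu setT) => //; last exact: dens_int.
  exact: measurableU.
- apply/disj_setPS => t /= []; rewrite !in_itv /= => t0 /andP[t0' _].
  by move: (le_lt_trans t0' t0); rewrite ltxx.
rewrite zero add0r; congr Rintegral.
apply/seteqP; split => t /=; rewrite in_itv /=.
  by move=> [-> ->].
by move=> /andP[-> ->].
Qed.

Lemma cdf_le0 (f : R -> R) (b : R) : is_density f -> b <= 0 -> CDF f b = 0.
Proof.
move=> df b0; rewrite -cdf_eq //.
have -> : [set t | 0 <= t /\ t < b] = set0.
  by apply/seteqP; split => t //= [t0 tb]; move: (le_lt_trans t0 (lt_le_trans tb b0)); rewrite ltxx.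
by rewrite Rintegral_set0.
Qed.

Lemma cdf_ge0 (f : R -> R) (b : R) : is_density f -> 0 <= CDF f b.
Proof. by move=> [_ [f0 _]]; apply: Rintegral_ge0. Qed.

End Env.

Theorem mainTheorem1 (R : realType) (nA nB : nat) (fA fB : R -> R) (sigma : R -> R) :
  (1 <= nB)%N ->
  is_density fA -> is_density fB ->
  {in `[0, +oo[ &, {mono sigma : x y / x < y}} ->
  is_BNE_B fA fB nA nB sigma ->
  forall v : R, 0 <= v ->
  (CDF fB v) ^+ (nB - 1) * (CDF fA (sigma v)) ^+ nA != 0 ->
  sigma v = v - Rintegral (@lebesgue_measure R) `[0, v]
                  (fun t => (CDF fB t) ^+ (nB - 1) * (CDF fA (sigma t)) ^+ nA)
              / ((CDF fB v) ^+ (nB - 1) * (CDF fA (sigma v)) ^+ nA).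
Proof.
move=> nB1 dA dB smono bne v v0 Gv.
pose g t := CDF fB t ^+ (nB - 1) * CDF fA (sigma t) ^+ nA.
pose U t := (t - sigma t) * g t.
have pA : forall b, prob_below fA id b = CDF fA b.
  by move=> b; rewrite /prob_below cdf_eq.
have pB : forall a, 0 <= a -> prob_below fB sigma (sigma a) = CDF fB a.
  move=> a a0; rewrite /prob_below -cdf_eq //; congr Rintegral.
  apply/seteqP; split => t /= [t0 h]; split => //.
    by rewrite -(smono t a) // !in_itv /= ?t0 ?a0.
  by rewrite (smono t a) // !in_itv /= ?t0 ?a0.
have pay : forall w a, 0 <= a ->
    payoffB fA fB nA nB sigma w (sigma a) = (w - sigma a) * g a.
  by move=> w a a0; rewrite /payoffB pA pB // /g; ring.
have HU : forall a b, 0 <= a -> 0 <= b -> U a + (b - a) * g a <= U b.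
  move=> a b a0 b0; have := bne b (sigma a) b0; rewrite !pay //.
  have -> : U a + (b - a) * g a = (b - sigma a) * g a by rewrite /U; ring.
  by [].
have env := @envelope R g U v HU v0.
have gge0 : forall t, 0 <= g t.
  by move=> t; rewrite /g mulr_ge0 // exprn_ge0 // cdf_ge0.
have U0 : U 0 = 0.
  apply/le_anti/andP; split; last first.
    have := bne 0 (-1) (lexx 0); rewrite pay // -/(U 0) => H; apply: le_trans H.
    rewrite /payoffB mulr_ge0 // ?mulr_ge0 // ?exprn_ge0 //; try lra.
      by case: dA => _ [f0 _]; apply: Rintegral_ge0.
    by case: dB => _ [f0 _]; apply: Rintegral_ge0.
  rewrite /U; have [s0|s0] := leP 0 (sigma 0).
    have := gge0 0; nra.
  have cA : CDF fA (sigma 0) = 0 by rewrite cdf_le0 //; exact: ltW.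
  have [nA0|nApos] := posnP nA; last first.
    by rewrite /g cA expr0n (gtn_eqF nApos) !mulr0.
  have [nB1'|nB2] : nB = 1%N \/ (1 < nB)%N.
    by case: nB nB1 {Gv bne g U pay HU env gge0} => [|[|k]] //; [left|right].
    have := bne 0 (sigma 0 - 1) (lexx 0).
    rewrite /payoffB nA0 nB1' subnn !expr0 !mulr1 /g nA0 nB1' subnn !expr0 !mulr1; lra.
  rewrite /g cdf_le0 // expr0n.
  have -> : (nB - 1 == 0)%N = false by apply/negbTE; rewrite subn_eq0 -ltnNge.
  by rewrite !mul0r mulr0.
rewrite -/g -env U0 subr0 /U mulfK //; lra.
Qed.
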